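(* Let $r\ge1$ and $N\ge r$ be integers, let $a_{-r},\dots,a_0$ be coefficients with $a_{-r}\neq0$ and $|a_0|<1$, and let $B\in\mathcal M_{r,N}(\mathbb C)$ be a constant matrix whose left $r\times r$ block $B[1:r,1:r]$ is invertible. For every $z\in\overline{\mathcal U}$ there exists a unique matrix $C(z)\in\mathcal M_r(\mathbb C)$ such that \[ B\,\pi(U)=\big(0_{r\times(N-r)}\ \big|\ C(z)\big)\,\pi(U)\quad\text{for all }U\in\mathcal E^s(z). \] Moreover the entries of $C(z)$ are polynomial functions of $z$, and $\det C(z)$ is a polynomial in $z$ of degree exactly $N-r$.
   Context: $\overline{\mathcal U}=\{z\in\mathbb C:|z|\ge1\}$. For $z\in\overline{\mathcal U}$, $\mathcal E^s(z)$ denotes the (r-dimensional) space of complex sequences $U=(U_j)_{j\ge -r}$ satisfying $zU_j=\sum_{k=-r}^{0}a_kU_{j+k}$ for all $j\ge 0$. The map $\pi$ sends such a sequence to its first $N$ components, $\pi(U)=(U_{-r},U_{-r+1},\dots,U_{-r+N-1})^T\in\mathbb C^N$. $0_{r\times(N-r)}$ is the zero matrix, so $(0\,|\,C(z))\in\mathcal M_{r,N}(\mathbb C)$. *)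

(* Defs.v *)
From HB Require Import structures.
From mathcomp Require Import all_boot all_order all_algebra.
From mathcomp Require Import complex.
From mathcomp Require Import reals.
Set Implicit Arguments. Unset Strict Implicit. Unset Printing Implicit Defensive.
Import Order.TTheory GRing.Theory Num.Theory.
Local Open Scope ring_scope.

Section Defs.
Variable R : realType.
Local Notation C := (R[i]).

(* A sequence U = (U_j)_{j >= -r} is modelled as U : int -> C (values at j < -r are irrelevant).
   Coefficients a_{-r},...,a_0 are modelled as a : int -> C (only a_{-r..0} are used). *)

Definition in_Es (r : nat) (a : int -> C) (z : C) (U : int -> C) : Prop :=
  forall j : int, (0 <= j)%R ->
    z * U j = \sum_(i < r.+1) a (i%:Z - r%:Z) * U (j + (i%:Z - r%:Z)).

Definition piU (r N : nat) (U : int -> C) : 'cV[C]_N :=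
  \col_(i < N) U (i%:Z - r%:Z).

Definition leftblock (r N : nat) (hrN : (r <= N)%N) (B : 'M[C]_(r, N)) : 'M[C]_r :=
  \matrix_(i < r, j < r) B i (widen_ord hrN j).

Definition zeroC (r N : nat) (hrN : (r <= N)%N) (M : 'M[C]_r) : 'M[C]_(r, N) :=
  castmx (erefl r, subnK hrN) (row_mx (0 : 'M[C]_(r, N - r)) M).

End Defs.

(* Main.v *)
Require Import Defs.
From HB Require Import structures.
From mathcomp Require Import all_boot all_order all_algebra all_fingroup.
From mathcomp Require Import ring zify.
From mathcomp Require Import complex reals.
Import Order.TTheory GRing.Theory Num.Theory.
Set Implicit Arguments. Unset Strict Implicit. Unset Printing Implicit Defensive.
Local Open Scope ring_scope.

Definition Lp (F : fieldType) (r m : nat) (a : int -> F) : 'M[{poly F}]_(m, m + r) :=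
  \matrix_(j < m, c < m + r) ((('X - (a 0)%:P) *+ ((c : nat) == j + r)%N)
     - \sum_(i < r) (a (i%:Z - r%:Z))%:P *+ ((c : nat) == j + i)%N).

Definition Mp (F : fieldType) (r m : nat) (a : int -> F) : 'M[{poly F}]_(m + r) :=
  col_mx (Lp r m a) (row_mx 0 1%:M).

Definition ccst (F : fieldType) (r m : nat) (a : int -> F) : F := (- a (- r%:Z)) ^+ m.

Definition Qp (F : fieldType) (r m : nat) (a : int -> F) : 'M[{poly F}]_(m + r) :=
  (ccst r m a)^-1%:P *: \adj (Mp r m a).

Lemma det_Mp (F : fieldType) (r m : nat) (a : int -> F) : (0 < r)%N ->
  \det (Mp r m a) = (ccst r m a)%:P.
Proof.
case: r a => // r a _.
rewrite /Mp -[Lp r.+1 m a]hsubmxK -/(block_mx _ _ _ _) det_ublock det1 mulr1.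
rewrite -det_tr det_trig.
  rewrite /ccst rmorphXn /= -[m in _ ^+ m]card_ord -prodr_const.
  apply: eq_bigr => i _; rewrite !mxE /= -{1}(addn0 i) eqn_add2l /= mulr0n sub0r.
  rewrite big_ord_recl /= addn0 eqxx mulr1n big1 ?addr0 ?sub0r ?rmorphN //.
  by move=> k _; rewrite -{1}(addn0 i) eqn_add2l.
apply/forallP => i; apply/forallP => j; apply/implyP => hij.
have hF k : ((i:nat) == j + k)%N = false.
  by apply/negbTE; rewrite neq_ltn (leq_trans hij) ?leq_addr.
rewrite !mxE /= hF mulr0n sub0r big1 ?oppr0 //= => k _.
by rewrite hF.
Qed.

Lemma ccst_neq0 (F : fieldType) (r m : nat) (a : int -> F) :
  a (- r%:Z) != 0 -> ccst r m a != 0.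
Proof. by move=> h; rewrite /ccst expf_neq0 // oppr_eq0. Qed.

Lemma MpQp (F : fieldType) (r m : nat) (a : int -> F) : (0 < r)%N -> a (- r%:Z) != 0 ->
  Mp r m a *m Qp r m a = 1%:M /\ Qp r m a *m Mp r m a = 1%:M.
Proof.
move=> hr ha; have hc := ccst_neq0 m ha.
rewrite /Qp -scalemxAr -scalemxAl mul_mx_adj mul_adj_mx det_Mp // scale_scalar_mx.
by rewrite -polyCM mulVf.
Qed.

Definition ev (F : fieldType) (z : F) := horner_eval z.

Lemma Lz_entry (F : fieldType) (r m : nat) (a : int -> F) z j c :
  map_mx (horner_eval z) (Lp r m a) j c =
  (z - a 0) *+ ((c : nat) == j + r)%N - \sum_(i < r) a (i%:Z - r%:Z) *+ ((c : nat) == j + i)%N.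
Proof.
rewrite !mxE rmorphB rmorphMn rmorph_sum /= !horner_evalE hornerXsubC; congr (_ - _).
by apply: eq_bigr => i _; rewrite rmorphMn /= horner_evalE hornerC.
Qed.

Lemma Mz_eq (F : fieldType) (r m : nat) (a : int -> F) z :
  map_mx (horner_eval z) (Mp r m a) = col_mx (map_mx (horner_eval z) (Lp r m a)) (row_mx 0 1%:M).
Proof. by rewrite /Mp map_col_mx map_row_mx map_mx0 map_mx1. Qed.

Lemma Mz_mul (F : fieldType) (r m : nat) (a : int -> F) z (Y : 'cV[F]_(m + r)) :
  map_mx (horner_eval z) (Mp r m a) *m Y = col_mx (map_mx (horner_eval z) (Lp r m a) *m Y) (dsubmx Y).
Proof.
rewrite Mz_eq mul_col_mx; congr col_mx.
by rewrite -{1}[Y]vsubmxK mul_row_col mul0mx add0r mul1mx.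
Qed.

Definition Pp (F : fieldType) (r m : nat) (a : int -> F) (B : 'M[F]_(r, m + r)) : 'M[{poly F}]_r :=
  rsubmx (map_mx polyC B *m Qp r m a).

Lemma Pz_eq (F : fieldType) (r m : nat) (a : int -> F) (B : 'M[F]_(r, m + r)) z :
  map_mx (horner_eval z) (Pp a B) = rsubmx (B *m map_mx (horner_eval z) (Qp r m a)).
Proof.
rewrite /Pp map_rsubmx map_mxM; congr (rsubmx (_ *m _)).
by apply/matrixP => i j; rewrite !mxE /=; exact: hornerC.
Qed.

Lemma key1 (F : fieldType) (r m : nat) (a : int -> F) (B : 'M[F]_(r, m + r)) z (Y : 'cV[F]_(m + r)) :
  (0 < r)%N -> a (- r%:Z) != 0 ->
  map_mx (horner_eval z) (Lp r m a) *m Y = 0 ->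
  B *m Y = map_mx (horner_eval z) (Pp a B) *m dsubmx Y.
Proof.
move=> hr ha hL.
have [_ QM] := MpQp m hr ha.
have QM' : map_mx (horner_eval z) (Qp r m a) *m map_mx (horner_eval z) (Mp r m a) = 1%:M.
  by rewrite -map_mxM QM map_mx1.
rewrite -{1}[Y]mul1mx -QM' -mulmxA Mz_mul hL mulmxA -[B *m _]hsubmxK mul_row_col mulmx0 add0r.
by rewrite Pz_eq.
Qed.

Lemma key2 (F : fieldType) (r m : nat) (a : int -> F) z (w : 'cV[F]_r) :
  (0 < r)%N -> a (- r%:Z) != 0 ->
  let Y := map_mx (horner_eval z) (Qp r m a) *m col_mx 0 w in
  map_mx (horner_eval z) (Lp r m a) *m Y = 0 /\ dsubmx Y = w.
Proof.
move=> hr ha Y.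
have [MQ _] := MpQp m hr ha.
have MQ' : map_mx (horner_eval z) (Mp r m a) *m map_mx (horner_eval z) (Qp r m a) = 1%:M.
  by rewrite -map_mxM MQ map_mx1.
have : map_mx (horner_eval z) (Mp r m a) *m Y = col_mx 0 w by rewrite /Y mulmxA MQ' mul1mx.
by rewrite Mz_mul => /eq_col_mx.
Qed.

Lemma schur (T : comNzRingType) n1 n2 (Aul : 'M[T]_n1) (Aur : 'M_(n1, n2)) (Adl : 'M_(n2, n1))
   (Adr : 'M_n2) (D : 'M_n2) : D *m Adr = 1%:M ->
  \det (block_mx Aul Aur Adl Adr) = \det (Aul - Aur *m D *m Adl) * \det Adr.
Proof.
move=> hD.
have -> : block_mx Aul Aur Adl Adr =
   block_mx 1%:M (Aur *m D) 0 1%:M *m block_mx (Aul - Aur *m D *m Adl) 0 Adl Adr.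
  rewrite mulmx_block !mul1mx !mul0mx !add0r subrK -mulmxA hD mulmx1.
  by [].
by rewrite det_mulmx det_ublock det_lblock !det1 !mul1r.
Qed.

Definition fperm (m r : nat) (j : 'I_(m + r)) : 'I_(m + r) :=
  if (j < m)%N then insubd j (j + r)%N else insubd j (j - m)%N.

Lemma fperm_inj m r : injective (@fperm m r).
Proof.
have ho (j : 'I_(m + r)) : (j < m + r)%N := ltn_ord j.
move=> x y; rewrite /fperm; move: (ho x) (ho y).
case: ifP => hx; case: ifP => hy hx' hy' /(congr1 val); rewrite !insubdK; try lia.
all: move=> h; apply: ord_inj; lia.
Qed.

Definition K1 (F : fieldType) (r m : nat) (a : int -> F) : 'M[F]_m :=
  \matrix_(j < m, c < m) (a 0 *+ ((c : nat) == j)%N + \sum_(i < r) a (i%:Z - r%:Z) *+ ((c : nat) + r == j + i)%N).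
Definition A1 (F : fieldType) (r m : nat) (a : int -> F) : 'M[F]_(m, r) :=
  \matrix_(j < m, k < r) (- \sum_(i < r) a (i%:Z - r%:Z) *+ ((k : nat) == j + i)%N).
Definition B2 (F : fieldType) (r m : nat) (B : 'M[F]_(r, m + r)) : 'M[F]_(r, m) :=
  \matrix_(k < r, c < m) B k (insubd (lshift r c) (c + r)%N).
Definition B1 (F : fieldType) (r m : nat) (B : 'M[F]_(r, m + r)) : 'M[F]_r :=
  \matrix_(k < r, c < r) B k (insubd (rshift m c) (c : nat)).

Lemma M2_perm (F : fieldType) (r m : nat) (a : int -> F) (B : 'M[F]_(r, m + r)) :
  col_perm (perm (@fperm_inj m r)) (col_mx (Lp r m a) (map_mx polyC B)) =
  block_mx (char_poly_mx (K1 r m a)) (map_mx polyC (A1 r m a)) (map_mx polyC (B2 B)) (map_mx polyC (B1 B)).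
Proof.
apply/matrixP => ii jj; rewrite -[ii]splitK -[jj]splitK.
case: (split ii) => i1; case: (split jj) => j1; rewrite /= ?block_mxEul ?block_mxEur ?block_mxEdl ?block_mxEdr;
  rewrite [LHS]mxE perm.permE /fperm /= ?col_mxEu ?col_mxEd ?ltn_ord ?ltnNge ?leq_addr /= ?addKn ?mxE //.
  rewrite insubdK ?inE ?ltn_add2r //.
  have -> : ((j1 + r)%N == (i1 + r)%N) = (i1 == j1) by rewrite eqn_add2r eq_sym.
  rewrite rmorphD rmorphMn rmorph_sum /= mulrnBl opprD addrA.
  congr (_ - _ - _); first by rewrite eq_sym.
  by apply: eq_bigr => k _; rewrite rmorphMn.
  by rewrite -topredE /= ltn_add2r.
rewrite insubdK; last by rewrite -topredE /= ltn_addl.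
have -> : ((j1 : nat) == i1 + r)%N = false.
  by apply/negbTE; rewrite neq_ltn (leq_trans (ltn_ord j1)) ?leq_addl.
rewrite mulr0n sub0r rmorphN rmorph_sum; congr (- _).
by apply: eq_bigr => k _; rewrite rmorphMn.
Qed.

Lemma size_det_M2 (F : fieldType) (r m : nat) (a : int -> F) (B : 'M[F]_(r, m + r)) :
  B1 B \in unitmx -> size (\det (col_mx (Lp r m a) (map_mx polyC B))) = m.+1.
Proof.
move=> hB.
set M2 := col_mx _ _.
have hs : size (\det M2) = size (\det (col_perm (perm (@fperm_inj m r)) M2)).
  rewrite col_permE det_mulmx det_perm.
  by case: (perm.odd_perm _); rewrite ?expr1 ?expr0 ?mulrN1 ?mulr1 ?size_polyN.
rewrite hs M2_perm (@schur _ _ _ _ _ _ _ (map_mx polyC (invmx (B1 B)))); last first.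
  by rewrite -map_mxM mulVmx // map_mx1.
rewrite -!map_mxM /char_poly_mx.
have := size_char_poly (K1 r m a + A1 r m a *m invmx (B1 B) *m B2 B).
rewrite /char_poly /char_poly_mx map_mxD opprD addrA => <-.
rewrite det_map_mx /= mulrC size_Cmul //.
by rewrite -unitfE -unitmxE.
Qed.

Lemma size_det_Pp (F : fieldType) (r m : nat) (a : int -> F) (B : 'M[F]_(r, m + r)) :
  (0 < r)%N -> a (- r%:Z) != 0 -> B1 B \in unitmx -> size (\det (Pp a B)) = m.+1.
Proof.
move=> hr ha hB.
have [MQ _] := MpQp m hr ha.
have hc := ccst_neq0 m ha.
have hQ : \det (Qp r m a) = (ccst r m a)^-1%:P.
  have := congr1 determinant MQ; rewrite det_mulmx det_Mp // det1 => h.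
  by rewrite -[LHS]mul1r -[1]/(1%:P) -(mulVf hc) polyCM -mulrA h mulr1.
have e1 : col_mx (Lp r m a) (map_mx polyC B) *m Qp r m a =
    block_mx 1%:M 0 (lsubmx (map_mx polyC B *m Qp r m a)) (Pp a B).
  rewrite mul_col_mx /block_mx /Pp hsubmxK; congr col_mx.
  have -> : Lp r m a *m Qp r m a = usubmx (Mp r m a *m Qp r m a) by rewrite /Mp mul_col_mx col_mxKu.
  by rewrite MQ (scalar_mx_block m r) /block_mx col_mxKu.
have := congr1 determinant e1; rewrite det_lblock det1 mul1r det_mulmx hQ => <-.
by rewrite mulrC size_Cmul ?invr_eq0 // size_det_M2.
Qed.

Definition Yf (F : fieldType) n (Y : 'cV[F]_n) (k : nat) : F :=
  if (insub k : option 'I_n) is Some i then Y i 0 else 0.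

Lemma Yf_ord (F : fieldType) n (Y : 'cV[F]_n) (i : 'I_n) : Yf Y i = Y i 0.
Proof. by rewrite /Yf valK. Qed.

Lemma delta_sum (F : fieldType) n (Y : 'cV[F]_n) (x : F) (k : nat) :
  \sum_(c < n) x *+ ((c : nat) == k)%N * Y c 0 = x * Yf Y k.
Proof.
case hk: (k < n)%N.
  rewrite (bigD1 (Ordinal hk)) //= eqxx mulr1n big1 ?addr0 -?(Yf_ord Y (Ordinal hk)) //.
  move=> c hc; suff -> : ((c : nat) == k)%N = false by rewrite mulr0n mul0r.
  by apply/negbTE; apply: contra hc => /eqP h; apply/eqP; apply: val_inj.
rewrite /Yf insubF // mulr0 big1 // => c _.
suff -> : ((c : nat) == k)%N = false by rewrite mulr0n mul0r.
by apply/negbTE; apply: contraFN hk => /eqP <-.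
Qed.

Lemma LzY (F : fieldType) (r m : nat) (a : int -> F) z (Y : 'cV[F]_(m + r)) (j : 'I_m) :
  (map_mx (horner_eval z) (Lp r m a) *m Y) j 0 =
  (z - a 0) * Yf Y (j + r) - \sum_(i < r) a (i%:Z - r%:Z) * Yf Y (j + i).
Proof.
rewrite mxE.
under eq_bigr => c _ do rewrite Lz_entry mulrBl.
rewrite sumrB delta_sum; congr (_ - _).
under eq_bigr => c _ do rewrite mulr_suml.
rewrite exchange_big /=; apply: eq_bigr => i _.
exact: delta_sum.
Qed.

Fixpoint vs (F : fieldType) (r m : nat) (a : int -> F) (z : F) (Y : 'cV[F]_(m + r)) (n : nat) : seq F :=
  if n is n'.+1 then
    let s := vs a z Y n' in
    rcons s (if (n' < m + r)%N then Yf Y n'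
             else (\sum_(i < r) a (i%:Z - r%:Z) * nth 0 s (n' - r + i)%N) / (z - a 0))
  else [::].

Lemma size_vs (F : fieldType) (r m : nat) (a : int -> F) z (Y : 'cV[F]_(m + r)) n :
  size (vs a z Y n) = n.
Proof. by elim: n => //= n IH; rewrite size_rcons IH. Qed.

Lemma nth_vs (F : fieldType) (r m : nat) (a : int -> F) z (Y : 'cV[F]_(m + r)) n i :
  (i < n)%N -> nth 0 (vs a z Y n) i = nth 0 (vs a z Y i.+1) i.
Proof.
elim: n => // n IH; rewrite ltnS leq_eqVlt => /orP [/eqP ->|hi] //.
by rewrite [vs _ _ _ n.+1]/= nth_rcons size_vs hi IH.
Qed.

Definition Vn (F : fieldType) (r m : nat) (a : int -> F) z (Y : 'cV[F]_(m + r)) n :=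
  nth 0 (vs a z Y n.+1) n.

Lemma Vn_lt (F : fieldType) (r m : nat) (a : int -> F) z (Y : 'cV[F]_(m + r)) n :
  (n < m + r)%N -> Vn a z Y n = Yf Y n.
Proof. by move=> h; rewrite /Vn /= nth_rcons size_vs ltnn eqxx h. Qed.

Lemma Vn_ge (F : fieldType) (r m : nat) (a : int -> F) z (Y : 'cV[F]_(m + r)) n :
  (m + r <= n)%N ->
  Vn a z Y n = (\sum_(i < r) a (i%:Z - r%:Z) * Vn a z Y (n - r + i)%N) / (z - a 0).
Proof.
move=> h; rewrite /Vn /= nth_rcons size_vs ltnn eqxx ltnNge h /=; congr (_ / _).
apply: eq_bigr => i _; rewrite nth_vs //.
have := ltn_ord i; lia.
Qed.

Definition Uf (R : realType) (r m : nat) (a : int -> R[i]) z (Y : 'cV[R[i]]_(m + r)) : int -> R[i] :=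
  fun j => Vn a z Y (absz (j + r%:Z)).

Lemma piU_Uf (R : realType) (r m : nat) (a : int -> R[i]) z (Y : 'cV[R[i]]_(m + r)) :
  piU r (m + r) (Uf a z Y) = Y.
Proof.
apply/matrixP => i j; rewrite ord1 mxE /Uf subrK absz_nat Vn_lt // Yf_ord.
by case: j => [[]].
Qed.

Lemma Es_Uf (R : realType) (r m : nat) (a : int -> R[i]) z (Y : 'cV[R[i]]_(m + r)) :
  z != a 0 -> map_mx (horner_eval z) (Lp r m a) *m Y = 0 -> in_Es r a z (Uf a z Y).
Proof.
move=> hz hL j; case: j => // n0 _.
have hU (i : nat) : Uf a z Y (n0%:Z + (i%:Z - r%:Z)) = Vn a z Y (n0 + i).
  by rewrite /Uf addrA subrK -PoszD absz_nat.
have hU0 : Uf a z Y n0 = Vn a z Y (n0 + r) by rewrite /Uf -PoszD absz_nat.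
under eq_bigr => i _ do rewrite hU.
rewrite big_ord_recr /= subrr hU0.
set S := \sum_(i < r) _.
case: (ltnP n0 m) => hn.
  have := congr1 (fun M : 'cV[R[i]]_m => M (Ordinal hn) 0) hL; rewrite LzY mxE /= => e.
  have hV (i : 'I_r) : Vn a z Y (n0 + i) = Yf Y (n0 + i).
    by rewrite Vn_lt //; have := ltn_ord i; lia.
  rewrite /S; under eq_bigr => i _ do rewrite hV.
  move: e; rewrite Vn_lt ?ltn_add2r //.
  set T := \sum_(i < r) _; set V := Yf Y _ => e.
  have -> : T = (z - a 0) * V by apply/eqP; rewrite eq_sym -subr_eq0 e.
  ring.
have hz' : z - a 0 != 0 by rewrite subr_eq0.
rewrite Vn_ge ?leq_add2r // addnK -/S.
by field.
Qed.

Lemma Yf_piU (R : realType) (r m : nat) (U : int -> R[i]) k :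
  (k < m + r)%N -> Yf (piU r (m + r) U) k = U (k%:Z - r%:Z).
Proof.
move=> h; rewrite /Yf; case: insubP => [i _ <-|/negP //]; by rewrite mxE.
Qed.

Lemma piU_Es (R : realType) (r m : nat) (a : int -> R[i]) z (U : int -> R[i]) :
  in_Es r a z U -> map_mx (horner_eval z) (Lp r m a) *m piU r (m + r) U = 0.
Proof.
move=> hE; apply/matrixP => j k; rewrite ord1 [RHS]mxE LzY.
have := hE j isT; rewrite big_ord_recr /= subrr addr0 => e.
rewrite Yf_piU ?ltn_add2r // PoszD addrK.
have hV (i : 'I_r) : Yf (piU r (m + r) U) (j + i) = U (j%:Z + (i%:Z - r%:Z)).
  by rewrite Yf_piU ?PoszD -?addrA //; have := ltn_ord i; have := ltn_ord j; lia.
under eq_bigr => i _ do rewrite hV.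
rewrite mulrBl e; ring.
Qed.

Lemma zeroCE (R : realType) (r m : nat) (h : (r <= m + r)%N) (M : 'M[R[i]]_r) :
  zeroC h M = row_mx 0 M.
Proof.
apply/matrixP => ii jj; rewrite /zeroC castmxE /=.
rewrite -[jj]splitK; case: (split jj) => j1; rewrite ?row_mxEl ?row_mxEr [LHS]mxE;
  case: splitP => k /= hk; rewrite ?mxE //.
- by exfalso; have := ltn_ord j1; move: hk; lia.
- by exfalso; have := ltn_ord k; move: hk; lia.
- by congr (M _ _); apply: val_inj => //=; move: hk; lia.
Qed.

Lemma main_m (R : realType) (r m : nat) (hr : (0 < r)%N) (hrN : (r <= m + r)%N)
  (a : int -> R[i]) (ha_r : a (- (r%:Z)) != 0) (ha0 : `|a 0| < 1)
  (B : 'M[R[i]]_(r, m + r)) (hB : leftblock hrN B \in unitmx) :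
  exists (P : 'M[{poly R[i]}]_r) (p : {poly R[i]}),
    size p = (m + r - r).+1 /\
    forall z : R[i], 1 <= `|z| ->
      (forall Cz : 'M[R[i]]_r,
         (forall U : int -> R[i], in_Es r a z U ->
            B *m piU r (m + r) U = zeroC hrN Cz *m piU r (m + r) U)
         <-> Cz = map_mx (fun q : {poly R[i]} => q.[z]) P)
      /\ \det (map_mx (fun q : {poly R[i]} => q.[z]) P) = p.[z].
Proof.
have hB1 : B1 B \in unitmx.
  suff -> : B1 B = leftblock hrN B by [].
  apply/matrixP => i j; rewrite !mxE; congr (B _ _); apply: val_inj => /=.
  by rewrite insubdK // -topredE /= ltn_addl.
exists (Pp a B), (\det (Pp a B)); split; first by rewrite addnK size_det_Pp.
move=> z hz.
have hza : z != a 0.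
  apply/eqP => e; move: ha0; rewrite -e => h.
  by have := le_lt_trans hz h; rewrite ltxx.
have -> : (fun q : {poly R[i]} => q.[z]) = horner_eval z by [].
split; last by rewrite det_map_mx.
move=> Cz; split.
  move=> H; apply/matrixP => i j.
  have [hL hd] := key2 m z (delta_mx j 0) hr ha_r.
  set Y := map_mx _ _ *m _ in hL hd.
  have := H _ (Es_Uf hza hL); rewrite piU_Uf zeroCE -[X in _ = _ *m X]vsubmxK mul_row_col mul0mx add0r.
  rewrite (key1 _ hr ha_r hL) hd => e.
  have := congr1 (fun M : 'cV[R[i]]_r => M i 0) e; rewrite /= -!colE !mxE => ->.
  by [].
move=> -> U hU.
rewrite zeroCE -[X in _ = _ *m X]vsubmxK mul_row_col mul0mx add0r.
exact: key1 hr ha_r (piU_Es m hU).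
Qed.

Unset Implicit Arguments.

Theorem lemma3p2 (R : realType) (r N : nat) (hr : (0 < r)%N) (hrN : (r <= N)%N)
  (a : int -> R[i]) (ha_r : a (- (r%:Z)) != 0) (ha0 : `|a 0| < 1)
  (B : 'M[R[i]]_(r, N)) (hB : leftblock hrN B \in unitmx) :
  exists (P : 'M[{poly R[i]}]_r) (p : {poly R[i]}),
    size p = (N - r).+1 /\
    forall z : R[i], 1 <= `|z| ->
      (forall Cz : 'M[R[i]]_r,
         (forall U : int -> R[i], in_Es r a z U ->
            B *m piU r N U = zeroC hrN Cz *m piU r N U)
         <-> Cz = map_mx (fun q : {poly R[i]} => q.[z]) P)
      /\ \det (map_mx (fun q : {poly R[i]} => q.[z]) P) = p.[z].
Proof.
pose m := (N - r)%N.
have E : N = (m + r)%N by rewrite /m subnK.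
clearbody m; subst N.
exact: main_m.
Qed.
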